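(* Let $X$ and $Y$ be real Banach spaces such that $Y$ is uniformly convex and the set of norm-attaining operators $\mathrm{NA}(\mathcal F(X),Y)$ is dense in $\mathcal L(\mathcal F(X),Y)$. Then $\mathrm{A}(X,Y)$ is dense in $\mathrm{Lip}_0(X,Y)$.
   Context: $\widetilde X=\{(x,y)\in X^2:x\neq y\}$. $\mathrm{Lip}_0(X,Y)$ is the Banach space of Lipschitz $f\colon X\to Y$ with $f(0)=0$ and norm $\|f\|=\sup_{(x,y)\in\widetilde X}\|f(x)-f(y)\|/\|x-y\|$. The Lipschitz-free space $\mathcal F(X)$ is the closed linear span of $\{\delta_x:x\in X\}$ in $\mathrm{Lip}_0(X,\mathbb R)^*$, $\delta_x(g)=g(x)$. $\mathcal L(Z,Y)$ is the space of bounded linear operators with the operator norm, and $\mathrm{NA}(Z,Y)$ the set of $T\in\mathcal L(Z,Y)$ with $\|Tz\|=\|T\|$ for some $z\in S_Z$. $\mathrm{A}(X,Y)$ is the set of $f\in\mathrm{Lip}_0(X,Y)$ for which there exist $z\in Y$ with $\|z\|=\|f\|$ and $(x_n,y_n)\in\widetilde X$ with $\frac{f(x_n)-f(y_n)}{\|x_n-y_n\|}\to z$. *)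

(* Defs.v *)
From HB Require Import structures.
From mathcomp Require Import all_boot all_order all_algebra.
From mathcomp Require Import all_classical all_reals all_analysis.
Set Implicit Arguments. Unset Strict Implicit. Unset Printing Implicit Defensive.
Import Order.TTheory GRing.Theory Num.Theory.
Import numFieldNormedType.Exports.
Local Open Scope classical_set_scope.
Local Open Scope ring_scope.

Section Defs.
Context {R : realType}.

Definition Lip0 (X Y : normedModType R) (f : X -> Y) : Prop :=
  f 0 = 0 /\ exists C : R, forall x y : X, `|f x - f y| <= C * `|x - y|.

Definition lipnorm (X Y : normedModType R) (f : X -> Y) : R :=
  sup [set r : R | exists x y : X, x <> y /\ r = `|f x - f y| / `|x - y|].

(** Elements of Lip_0(X,R)^* are represented as maps (X -> R) -> R, normalised
    to vanish outside Lip_0(X,R) (so the representation is unique). *)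
Definition dnorm (X : normedModType R) (mu : (X -> R) -> R) : R :=
  sup [set r : R | exists g : X -> R, [/\ Lip0 g, lipnorm g <= 1 & r = `|mu g|]].

(** Finite linear combination  sum_i a_i delta_{x_i}  evaluated at g. *)
Definition comb_delta (X : normedModType R) (s : seq (R * X)) (g : X -> R) : R :=
  \sum_(p <- s) p.1 * g p.2.

(** The Lipschitz-free space F(X): closure, in the dual norm of Lip_0(X,R)^*,
    of the linear span of the evaluations delta_x. *)
Definition FX (X : normedModType R) : set ((X -> R) -> R) :=
  [set mu | (forall g : X -> R, ~ Lip0 g -> mu g = 0) /\
     forall eps : R, 0 < eps -> exists s : seq (R * X),
       forall g : X -> R, Lip0 g -> lipnorm g <= 1 ->
         `|mu g - comb_delta s g| <= eps].

(** Bounded linear operators F(X) -> Y (values off F(X) are irrelevant). *)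
Definition is_op (X Y : normedModType R) (T : ((X -> R) -> R) -> Y) : Prop :=
  (forall (a b : R) mu nu, FX mu -> FX nu ->
     T (fun g => a * mu g + b * nu g) = a *: T mu + b *: T nu) /\
  exists C : R, forall mu, FX mu -> `|T mu| <= C * dnorm mu.

Definition opnorm (X Y : normedModType R) (T : ((X -> R) -> R) -> Y) : R :=
  sup [set r : R | exists mu, [/\ FX mu, dnorm mu <= 1 & r = `|T mu|]].

Definition NA (X Y : normedModType R) (T : ((X -> R) -> R) -> Y) : Prop :=
  is_op T /\ exists mu, [/\ FX mu, dnorm mu = 1 & `|T mu| = opnorm T].

Definition uniformly_convex (Y : normedModType R) : Prop :=
  forall eps : R, 0 < eps -> exists delta : R, 0 < delta /\
    forall x y : Y, `|x| <= 1 -> `|y| <= 1 -> eps <= `|x - y| ->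
      `|(2%:R^-1 : R) *: (x + y)| <= 1 - delta.

Definition A_set (X Y : normedModType R) : set (X -> Y) :=
  [set f | Lip0 f /\ exists (z : Y) (x y : nat -> X),
     [/\ `|z| = lipnorm f, (forall n, x n <> y n) &
         (fun n => (`|x n - y n|)^-1 *: (f (x n) - f (y n))) @ \oo --> z]].

End Defs.

(* Main.v *)
Require Import Defs.
From HB Require Import structures.
From mathcomp Require Import all_boot all_order all_algebra.
From mathcomp Require Import all_classical all_reals all_analysis.
From mathcomp Require Import ring lra.
Import Order.TTheory GRing.Theory Num.Theory.
Import numFieldNormedType.Exports.
Local Open Scope classical_set_scope.
Local Open Scope ring_scope.
Set Implicit Arguments. Unset Strict Implicit. Unset Printing Implicit Defensive.

Section Aux.
Context {R : realType}.

Lemma sup_le_nn (E : set R) (b : R) : 0 <= b -> (forall e, E e -> e <= b) -> sup E <= b.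
Proof.
move=> b0 Eb; have [->|/set0P E0] := eqVneq E set0; first by rewrite sup0.
by apply: ge_sup.
Qed.

Lemma le_sup_of (E : set R) (b e : R) : (forall e, E e -> e <= b) -> E e -> e <= sup E.
Proof. by move=> Eb Ee; apply: ub_le_sup => //; exists b. Qed.

Section HBsec.
Variable (Y : normedModType R) (z : Y).

Let PG (G : set (Y * R)) :=
  [/\ G = set0 \/ G (z, `|z|),
      (forall u r v s a b, G (u, r) -> G (v, s) -> G (a *: u + b *: v, a * r + b * s)) &
      (forall u r, G (u, r) -> r <= `|u|)].

Lemma hahn_banach : exists phi : Y -> R,
  [/\ forall a b u v, phi (a *: u + b *: v) = a * phi u + b * phi v,
      forall y, phi y <= `|y| & phi z = `|z|].
Proof.
have [A [[A0 Alin Adom] Amax]] : exists A, PG A /\ forall B, A `<` B -> ~ PG B.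
  apply: Zorn_bigcup => F FP Ftot; split.
  - have [[X [FX Xz]]|nX] := pselect (exists X, F X /\ X (z, `|z|)).
      by right; exists X.
    left; apply/seteqP; split => // p [X FX Xp].
    have [X0 _ _] := FP _ FX; case: X0 => [X0|Xz]; first by rewrite X0 in Xp.
    by exfalso; apply: nX; exists X.
  - move=> u r v s a b [X1 F1 X1u] [X2 F2 X2v].
    have [X12|X21] := Ftot _ _ F1 F2.
      exists X2 => //; have [_ L _] := FP _ F2; apply: L => //; exact: X12.
    exists X1 => //; have [_ L _] := FP _ F1; apply: L => //; exact: X21.
  - by move=> u r [X FX Xu]; have [_ _ D] := FP _ FX; exact: D.
have Az : A (z, `|z|).
  case: A0 => // A0; exfalso.
  apply: (Amax [set p | exists t : R, p = (t *: z, t * `|z|)]).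
    rewrite A0 /proper; split => // /(_ (z, `|z|)) H; apply: H.
    by exists 1; rewrite scale1r mul1r.
  rewrite /PG; split.
  - by right; exists 1; rewrite scale1r mul1r.
  - move=> u r v s a b [t [-> ->]] [t' [-> ->]]; exists (a * t + b * t').
    by rewrite !scalerA scalerDl !mulrA mulrDl.
  - move=> u r [t [-> ->]]; rewrite normrZ; apply: ler_wpM2r => //.
    exact: ler_norm.
have A00 : A (0, 0).
  by have := Alin _ _ _ _ 0 0 Az Az; rewrite !scale0r !mul0r !addr0.
have Auniq y r s : A (y, r) -> A (y, s) -> r = s.
  move=> Ar As; apply/eqP; rewrite eq_le; apply/andP; split.
    have := Adom _ _ (Alin _ _ _ _ 1 (-1) Ar As).
    by rewrite scaleN1r scale1r subrr normr0 mulN1r mul1r subr_le0.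
  have := Adom _ _ (Alin _ _ _ _ 1 (-1) As Ar).
  by rewrite scaleN1r scale1r subrr normr0 mulN1r mul1r subr_le0.
have Atot y : exists r, A (y, r).
  apply: contrapT => nv.
  pose E := [set x | exists u r, A (u, r) /\ x = r - `|u - y|].
  pose c := sup E.
  have Eub u' r' : A (u', r') -> forall e, E e -> e <= `|u' + y| - r'.
    move=> Au' _ [u [r [Au ->]]].
    have := Adom _ _ (Alin _ _ _ _ 1 1 Au Au').
    rewrite !scale1r !mul1r (_ : u + u' = (u - y) + (u' + y)); last first.
      by rewrite addrA addrAC subrK.
    have := ler_normD (u - y) (u' + y); lra.
  have cE u r : A (u, r) -> r - `|u - y| <= c.
    by move=> Au; apply: (le_sup_of (Eub _ _ Az)); exists u, r.
  have Ec u r : A (u, r) -> c <= `|u + y| - r.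
    move=> Au; apply: ge_sup; last by move=> e; exact: (Eub _ _ Au).
    by exists (`|z| - `|z - y|); exists z, `|z|.
  apply: (Amax [set p | exists u r t, A (u, r) /\ p = (u + t *: y, r + t * c)]).
    split.
      by move=> [u r] Au; exists u, r, 0; rewrite scale0r mul0r !addr0.
    move=> /(_ (y, c)) H; apply: nv; exists c; apply: H.
    by exists 0, 0, 1; rewrite scale1r mul1r !add0r.
  rewrite /PG; split.
  - by right; exists z, `|z|, 0; rewrite scale0r mul0r !addr0.
  - move=> u0 r0 v0 s0 a b [u [r [t [Au [-> ->]]]]] [u' [r' [t' [Au' [-> ->]]]]].
    exists (a *: u + b *: u'), (a * r + b * r'), (a * t + b * t'); split.
      exact: Alin.
    congr pair; first by rewrite scalerDl !scalerDr !scalerA; rewrite addrACA.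
    by rewrite mulrDl !mulrDr !mulrA addrACA.
  - move=> u0 r0 [u [r [t [Au [-> ->]]]]].
    have [t0|t0|->] := ltgtP t 0; last by rewrite scale0r mul0r !addr0; exact: Adom.
    + have Au2 := Alin _ _ _ _ (- t)^-1 0 Au Au.
      rewrite scale0r mul0r !addr0 in Au2.
      have := cE _ _ Au2.
      have tp : 0 < - t by rewrite oppr_gt0.
      have E1 : (- t)^-1 *: u - y = (- t)^-1 *: (u + t *: y).
        by rewrite scalerDr scalerA invrN mulNr mulVf ?lt_eqF // scaleN1r.
      rewrite E1 normrZ gtr0_norm ?invr_gt0 // -mulrBr mulrC.
      rewrite ler_pdivrMr // => H; nra.
    + have Au2 := Alin _ _ _ _ t^-1 0 Au Au.
      rewrite scale0r mul0r !addr0 in Au2.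
      have := Ec _ _ Au2.
      have E1 : t^-1 *: u + y = t^-1 *: (u + t *: y).
        by rewrite scalerDr scalerA mulVf ?gt_eqF // scale1r.
      rewrite E1 normrZ gtr0_norm ?invr_gt0 // -mulrBr mulrC.
      rewrite ler_pdivlMr // => H; nra.
have /choice [phi Hphi] := Atot.
exists phi; split.
- move=> a b u v; apply: Auniq (Hphi _) _; exact: Alin.
- by move=> y; exact: Adom.
- exact: Auniq (Hphi _) Az.
Qed.

End HBsec.

Definition Ball (X : normedModType R) (h : X -> R) := Lip0 h /\ lipnorm h <= 1.

Lemma lip_quot (X Y : normedModType R) (f : X -> Y) x y : Lip0 f -> x <> y ->
  `|f x - f y| / `|x - y| <= lipnorm f.
Proof.
move=> [_ [C HC]] xy; apply: (@le_sup_of _ C); last by exists x, y.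
move=> _ [a [b [ab ->]]]; rewrite ler_pdivrMr ?normr_gt0 ?subr_eq0; first exact: HC.
by apply/eqP.
Qed.

Lemma lip_le (X Y : normedModType R) (f : X -> Y) x y : Lip0 f ->
  `|f x - f y| <= lipnorm f * `|x - y|.
Proof.
move=> Lf; have [->|xy] := pselect (x = y); first by rewrite !subrr !normr0 mulr0.
have := lip_quot Lf xy; rewrite ler_pdivrMr ?normr_gt0 ?subr_eq0 //; by apply/eqP.
Qed.

Lemma lipnorm_le (X Y : normedModType R) (f : X -> Y) b : 0 <= b ->
  (forall x y, `|f x - f y| <= b * `|x - y|) -> lipnorm f <= b.
Proof.
move=> b0 H; apply: sup_le_nn => // _ [x [y [xy ->]]].
rewrite ler_pdivrMr ?normr_gt0 ?subr_eq0; first exact: H.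
by apply/eqP.
Qed.

Lemma lipnorm_ge0 (X Y : normedModType R) (f : X -> Y) : Lip0 f -> 0 <= lipnorm f.
Proof.
move=> Lf; rewrite /lipnorm.
set E := (X in sup X).
have [->|/set0P [e Ee]] := eqVneq E set0; first by rewrite sup0.
case: (Lf) => _ [C HC]; apply: le_trans (@le_sup_of _ C _ _ Ee).
  by case: Ee => x [y [_ ->]]; rewrite divr_ge0.
move=> _ [x [y [xy ->]]]; rewrite ler_pdivrMr ?normr_gt0 ?subr_eq0; first exact: HC.
by apply/eqP.
Qed.

Lemma Ball_norm (X : normedModType R) (h : X -> R) x : Ball h -> `|h x| <= `|x|.
Proof.
move=> [Lh n1]; have := lip_le x 0 Lh; rewrite (proj1 Lh) !subr0 => H.
apply: le_trans H _; rewrite -[X in _ <= X]mul1r; apply: ler_wpM2r => //.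
Qed.

Lemma Ball0 (X : normedModType R) : Ball (fun _ : X => (0 : R)).
Proof.
have L0 : Lip0 (fun _ : X => (0 : R)).
  by split => //; exists 0 => x y; rewrite subrr normr0 mul0r.
split => //; apply: lipnorm_le => // x y; rewrite subrr normr0 mul1r normr_ge0 //.
Qed.

Lemma comb_cat (X : normedModType R) (s1 s2 : seq (R * X)) h :
  comb_delta (s1 ++ s2) h = comb_delta s1 h + comb_delta s2 h.
Proof. by rewrite /comb_delta big_cat. Qed.

Lemma comb_scale (X : normedModType R) (s : seq (R * X)) a h :
  comb_delta [seq (a * p.1, p.2) | p <- s] h = a * comb_delta s h.
Proof.
rewrite /comb_delta big_map mulr_sumr; apply: eq_bigr => p _ /=; by rewrite mulrA.
Qed.

Lemma comb_bound (X : normedModType R) (s : seq (R * X)) h : Ball h ->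
  `|comb_delta s h| <= \sum_(p <- s) `|p.1| * `|p.2|.
Proof.
move=> Bh; apply: le_trans (ler_norm_sum _ _ _) _; apply: ler_sum => p _.
rewrite normrM; apply: ler_wpM2l => //; exact: Ball_norm.
Qed.

Lemma dnorm_ub (X : normedModType R) (mu : (X -> R) -> R) h :
  FX mu -> Ball h -> `|mu h| <= dnorm mu.
Proof.
move=> [_ H] [Lh nh]; have [s Hs] := H 1 ltr01.
apply: (@le_sup_of _ (\sum_(p <- s) `|p.1| * `|p.2| + 1)); last by exists h.
move=> _ [g [Lg ng ->]].
have := Hs g Lg ng; have := comb_bound s (conj Lg ng).
have := ler_normD (mu g - comb_delta s g) (comb_delta s g); rewrite subrK; lra.
Qed.

Lemma dnorm_le (X : normedModType R) (mu : (X -> R) -> R) b : 0 <= b ->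
  (forall h, Ball h -> `|mu h| <= b) -> dnorm mu <= b.
Proof. by move=> b0 H; apply: sup_le_nn => // _ [g [Lg ng ->]]; apply: H. Qed.

Lemma dnorm_ge0 (X : normedModType R) (mu : (X -> R) -> R) : FX mu -> 0 <= dnorm mu.
Proof. by move=> Fmu; apply: le_trans (dnorm_ub Fmu (Ball0 X)). Qed.

Lemma FX_lin (X : normedModType R) (mu nu : (X -> R) -> R) a b :
  FX mu -> FX nu -> FX (fun h => a * mu h + b * nu h).
Proof.
move=> [mu0 Hmu] [nu0 Hnu]; split.
  by move=> g Lg; rewrite mu0 // nu0 // !mulr0 addr0.
move=> eps e0; set k := `|a| + `|b| + 1.
have k0 : 0 < k by rewrite /k; have := normr_ge0 a; have := normr_ge0 b; lra.
have e'0 : 0 < eps / k by rewrite divr_gt0.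
have [s1 H1] := Hmu _ e'0; have [s2 H2] := Hnu _ e'0.
exists ([seq (a * p.1, p.2) | p <- s1] ++ [seq (b * p.1, p.2) | p <- s2]) => g Lg ng.
rewrite comb_cat !comb_scale.
have -> : a * mu g + b * nu g - (a * comb_delta s1 g + b * comb_delta s2 g) =
  a * (mu g - comb_delta s1 g) + b * (nu g - comb_delta s2 g) by ring.
apply: le_trans (ler_normD _ _) _; rewrite !normrM.
have := H1 g Lg ng; have := H2 g Lg ng => h2 h1.
have := ler_wpM2l (normr_ge0 a) h1; have := ler_wpM2l (normr_ge0 b) h2.
have : (`|a| + `|b|) * (eps / k) <= eps.
  rewrite mulrA ler_pdivrMr // /k; nra.
lra.
Qed.

Definition combd (X : normedModType R) (s : seq (R * X)) : (X -> R) -> R :=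
  fun h => if `[< Lip0 h >] then comb_delta s h else 0.

Lemma FX_combd (X : normedModType R) (s : seq (R * X)) : FX (combd s).
Proof.
split; first by move=> g Lg; rewrite /combd asboolF.
move=> eps e0; exists s => g Lg _; rewrite /combd asboolT // subrr normr0; exact: ltW.
Qed.

Lemma combd_cons (X : normedModType R) p (s : seq (R * X)) h :
  combd (p :: s) h = p.1 * combd [:: (1, p.2)] h + 1 * combd s h.
Proof.
rewrite /combd; case: asboolP => _; last by rewrite !mulr0 addr0.
by rewrite /comb_delta !big_cons big_nil /= mul1r addr0 mul1r.
Qed.

Lemma opL (X Y : normedModType R) (S : ((X -> R) -> R) -> Y) mu nu a b F :
  is_op S -> FX mu -> FX nu -> (forall h, F h = a * mu h + b * nu h) ->
  S F = a *: S mu + b *: S nu.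
Proof.
move=> [L _] Fmu Fnu HF; have -> : F = (fun h => a * mu h + b * nu h) by apply: funext.
exact: L.
Qed.

Lemma op_nil (X Y : normedModType R) (S : ((X -> R) -> R) -> Y) :
  is_op S -> S (combd [::]) = 0.
Proof.
move=> Sop; rewrite (@opL _ _ S (combd [::]) (combd [::]) 0 0) ?scale0r ?addr0 //.
- exact: FX_combd.
- exact: FX_combd.
by move=> h; rewrite /combd; case: asboolP => _; rewrite ?mul0r ?addr0 // /comb_delta big_nil.
Qed.

Lemma op_combd (X Y : normedModType R) (S : ((X -> R) -> R) -> Y) s :
  is_op S -> S (combd s) = \sum_(p <- s) p.1 *: S (combd [:: (1, p.2)]).
Proof.
move=> Sop; elim: s => [|p s IH]; first by rewrite big_nil op_nil.
rewrite big_cons -IH (@opL _ _ S (combd [:: (1, p.2)]) (combd s) p.1 1) ?scale1r //.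
- exact: FX_combd.
- exact: FX_combd.
by move=> h; rewrite combd_cons.
Qed.


Lemma ev_inv (e : R) : 0 < e -> exists N, forall n, (N <= n)%N -> n.+1%:R^-1 < e.
Proof. move=> e0; have [N _ HN] := near_infty_natSinv_lt (PosNum e0). by exists N => n Hn; exact: HN. Qed.

Lemma le0_of_small (x K : R) : 0 <= K -> (forall e, 0 < e -> x <= K * e) -> x <= 0.
Proof.
move=> K0 H; rewrite leNgt; apply/negP => x0.
have k0 : 0 < K + 1 by lra.
have := H (x / (K + 1)) (divr_gt0 x0 k0).
rewrite mulrA ler_pdivlMr // => Hx; nra.
Qed.

Section Ops.
Variables (X Y : normedModType R).
Implicit Types (S T : ((X -> R) -> R) -> Y) (mu nu : (X -> R) -> R).

Lemma op_bound S : is_op S -> exists C, 0 <= C /\ forall mu, FX mu -> `|S mu| <= C * dnorm mu.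
Proof.
move=> [_ [C HC]]; exists (Num.max C 0); split; first by rewrite le_max lexx orbT.
move=> mu Fmu; apply: le_trans (HC _ Fmu) _; apply: ler_wpM2r; first exact: dnorm_ge0.
by rewrite le_max lexx.
Qed.

Lemma opnorm_ub S mu : is_op S -> FX mu -> dnorm mu <= 1 -> `|S mu| <= opnorm S.
Proof.
move=> Sop Fmu d1; have [C [C0 HC]] := op_bound Sop.
apply: (@le_sup_of _ C); last by exists mu.
move=> _ [nu [Fnu dn ->]]; apply: le_trans (HC _ Fnu) _.
by rewrite -[X in _ <= X]mulr1 ler_wpM2l.
Qed.

Lemma dnorm_nil : dnorm (combd (@nil (R * X))) <= 1.
Proof.
apply: dnorm_le => // h _; rewrite /combd; case: asboolP => _.
  by rewrite /comb_delta big_nil normr0.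
by rewrite normr0.
Qed.

Lemma opnorm_ge0 S : is_op S -> 0 <= opnorm S.
Proof.
move=> Sop; apply: le_trans (opnorm_ub Sop (FX_combd _) dnorm_nil) => //.
Qed.

Lemma op_le S mu : is_op S -> FX mu -> `|S mu| <= opnorm S * dnorm mu.
Proof.
move=> Sop Fmu; have [C [C0 HC]] := op_bound Sop.
have d0 := dnorm_ge0 Fmu.
have [dz|dp] := eqVneq (dnorm mu) 0.
  by have := HC _ Fmu; rewrite dz !mulr0.
have dpos : 0 < dnorm mu by rewrite lt_neqAle eq_sym dp d0.
pose nu := fun h => (dnorm mu)^-1 * mu h + 0 * mu h.
have Fnu : FX nu by apply: FX_lin.
have dnu : dnorm nu <= 1.
  apply: dnorm_le => // h Bh; rewrite /nu mul0r addr0 normrM gtr0_norm ?invr_gt0 //.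
  by rewrite ler_pdivrMl // mulr1; apply: dnorm_ub.
have := opnorm_ub Sop Fnu dnu.
rewrite (@opL _ _ S mu mu (dnorm mu)^-1 0 nu) // scale0r addr0 normrZ gtr0_norm ?invr_gt0 //.
by rewrite ler_pdivrMl // mulrC.
Qed.

Lemma is_op_sub T S : is_op T -> is_op S -> is_op (fun mu => T mu - S mu).
Proof.
move=> [LT [C1 H1]] [LS [C2 H2]]; split.
  move=> a b mu nu Fmu Fnu; rewrite LT // LS // !scalerBr.
  by rewrite opprD addrACA.
exists (C1 + C2) => mu Fmu; apply: le_trans (ler_normB _ _) _.
rewrite mulrDl; apply: lerD; [exact: H1 | exact: H2].
Qed.

Definition gS S (x : X) : Y := S (combd [:: (1, x)]).

Lemma gS_sub S x y : is_op S -> gS S x - gS S y = S (combd [:: (1, x); (-1, y)]).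
Proof.
move=> Sop; rewrite op_combd // !big_cons big_nil /gS /= scale1r addr0 scaleN1r //.
Qed.

Lemma dnorm_pair (x y : X) : dnorm (combd [:: (1, x); (-1, y)]) <= `|x - y|.
Proof.
apply: dnorm_le => // h [Lh nh]; rewrite /combd asboolT // /comb_delta !big_cons big_nil /=.
rewrite mul1r mulN1r addr0; apply: le_trans (lip_le x y Lh) _.
by rewrite -[X in _ <= X]mul1r ler_wpM2r.
Qed.

Lemma gS_lip S x y : is_op S -> `|gS S x - gS S y| <= opnorm S * `|x - y|.
Proof.
move=> Sop; rewrite gS_sub //; apply: le_trans (op_le Sop (FX_combd _)) _.
apply: ler_wpM2l; [exact: opnorm_ge0 | exact: dnorm_pair].
Qed.

Lemma gS0 S : is_op S -> gS S 0 = 0.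
Proof.
move=> Sop; rewrite /gS; have -> : combd [:: (1, (0 : X))] = combd [::].
  apply: funext => h; rewrite /combd; case: asboolP => // Lh.
  by rewrite /comb_delta big_cons !big_nil (proj1 Lh) mulr0 addr0.
exact: op_nil.
Qed.

Lemma gS_Lip0 S : is_op S -> Lip0 (gS S).
Proof. by move=> Sop; split; [exact: gS0 | exists (opnorm S) => x y; exact: gS_lip]. Qed.

End Ops.


Section Lin.
Variables (X : normedModType R) (Y : completeNormedModType R).

Definition Fs (f : X -> Y) (s : seq (R * X)) : Y := \sum_(p <- s) p.1 *: f p.2.

Lemma phi_props (phi : Y -> R) :
  (forall a b u v, phi (a *: u + b *: v) = a * phi u + b * phi v) ->
  [/\ phi 0 = 0, forall u v, phi (u + v) = phi u + phi v,
      forall a u, phi (a *: u) = a * phi u & forall u v, phi (u - v) = phi u - phi v].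
Proof.
move=> H.
have p0 : phi 0 = 0 by have := H 0 0 0 0; rewrite !scale0r addr0 !mul0r addr0.
have pD u v : phi (u + v) = phi u + phi v by have := H 1 1 u v; rewrite !scale1r !mul1r.
have pZ a u : phi (a *: u) = a * phi u.
  by have := H a 0 u u; rewrite scale0r addr0 mul0r addr0.
split => // u v; by rewrite pD -scaleN1r pZ mulN1r.
Qed.

Lemma phi_Fs (phi : Y -> R) f s :
  (forall a b u v, phi (a *: u + b *: v) = a * phi u + b * phi v) ->
  phi (Fs f s) = \sum_(p <- s) p.1 * phi (f p.2).
Proof.
move=> H; have [p0 pD pZ _] := phi_props H; rewrite /Fs.
elim: s => [|p s IH]; first by rewrite !big_nil.
by rewrite !big_cons pD pZ IH.
Qed.

Lemma Fs_cat f s1 s2 : Fs f (s1 ++ s2) = Fs f s1 + Fs f s2.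
Proof. by rewrite /Fs big_cat. Qed.

Lemma Fs_scale f s a : Fs f [seq (a * p.1, p.2) | p <- s] = a *: Fs f s.
Proof.
rewrite /Fs big_map scaler_sumr; apply: eq_bigr => p _ /=; by rewrite scalerA.
Qed.

Lemma Kbound f s M : Lip0 f -> (forall h, Ball h -> `|comb_delta s h| <= M) ->
  `|Fs f s| <= lipnorm f * M.
Proof.
move=> Lf HM; have L0 := lipnorm_ge0 Lf.
have M0 : 0 <= M by apply: le_trans (HM _ (Ball0 X)).
have [Lz|Lp] := eqVneq (lipnorm f) 0.
  have fz x : f x = 0.
    by have := lip_le x 0 Lf; rewrite Lz mul0r (proj1 Lf) subr0 normr_le0 => /eqP.
  by rewrite Lz mul0r /Fs big1 ?normr0 // => p _; rewrite fz scaler0.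
have Lpos : 0 < lipnorm f by rewrite lt_neqAle eq_sym Lp L0.
have [phi [Hlin Hle Hz]] := hahn_banach (Fs f s).
have [p0 pD pZ pB] := phi_props Hlin.
have Habs v : `|phi v| <= `|v|.
  rewrite ler_norml Hle andbT; have := Hle (- v).
  by rewrite normrN -scaleN1r pZ mulN1r lerNl.
pose h := fun x => (lipnorm f)^-1 * phi (f x).
have hl x y : `|h x - h y| <= `|x - y|.
  rewrite /h -mulrBr normrM gtr0_norm ?invr_gt0 // ler_pdivrMl // -pB.
  exact: le_trans (Habs _) (lip_le x y Lf).
have Bh : Ball h.
  split; last by apply: lipnorm_le => // x y; rewrite mul1r; exact: hl.
  split; first by rewrite /h (proj1 Lf) p0 mulr0.
  by exists 1 => x y; rewrite mul1r; exact: hl.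
have := HM h Bh.
have -> : comb_delta s h = (lipnorm f)^-1 * `|Fs f s|.
  rewrite -Hz phi_Fs // /comb_delta mulr_sumr; apply: eq_bigr => p _; by rewrite /h mulrCA.
by rewrite normrM gtr0_norm ?invr_gt0 // normr_id ler_pdivrMl.
Qed.

Lemma K2 f s1 s2 M : Lip0 f ->
  (forall h, Ball h -> `|comb_delta s1 h - comb_delta s2 h| <= M) ->
  `|Fs f s1 - Fs f s2| <= lipnorm f * M.
Proof.
move=> Lf HM; have := @Kbound f (s1 ++ [seq ((-1) * p.1, p.2) | p <- s2]) M Lf.
rewrite Fs_cat Fs_scale scaleN1r; apply => h Bh.
by rewrite comb_cat comb_scale mulN1r; apply: HM.
Qed.

Lemma approx_lin (mu nu : (X -> R) -> R) s1 s2 a b e1 e2 h :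
  `|mu h - comb_delta s1 h| <= e1 -> `|nu h - comb_delta s2 h| <= e2 ->
  `|a * mu h + b * nu h -
    comb_delta ([seq (a * p.1, p.2) | p <- s1] ++ [seq (b * p.1, p.2) | p <- s2]) h|
   <= `|a| * e1 + `|b| * e2.
Proof.
move=> h1 h2; rewrite comb_cat !comb_scale.
have -> : a * mu h + b * nu h - (a * comb_delta s1 h + b * comb_delta s2 h) =
  a * (mu h - comb_delta s1 h) + b * (nu h - comb_delta s2 h) by ring.
apply: le_trans (ler_normD _ _) _; rewrite !normrM.
by apply: lerD; apply: ler_wpM2l.
Qed.

Lemma Tf_exists f : Lip0 f -> exists T : ((X -> R) -> R) -> Y,
  is_op T /\ forall x, T (combd [:: (1, x)]) = f x.
Proof.
move=> Lf; set L := lipnorm f; have L0 : 0 <= L := lipnorm_ge0 Lf.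
have Hs mu : exists sq : nat -> seq (R * X), forall n, FX mu -> forall h, Ball h ->
    `|mu h - comb_delta (sq n) h| <= n.+1%:R^-1.
  suff HH : forall n : nat, exists s : seq (R * X), FX mu -> forall h, Ball h ->
      `|mu h - comb_delta s h| <= n.+1%:R^-1.
    by have [sq Hsq] := choice HH; exists sq.
  move=> n.
  have [Fmu|nF] := pselect (FX mu); last by exists [::].
  have e0 : 0 < n.+1%:R^-1 :> R by rewrite invr_gt0 ltr0Sn.
  have [_ H] := Fmu; have [s Hs] := H (n.+1%:R^-1) e0.
  by exists s => _ h [Lh nh]; exact: Hs.
have /choice [sel Hsel] := Hs.
pose u mu n := Fs f (sel mu n).
have Ksel mu s n e : FX mu -> (forall h, Ball h -> `|mu h - comb_delta s h| <= e) ->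
    `|u mu n - Fs f s| <= L * (n.+1%:R^-1 + e).
  move=> Fmu He; apply: K2 => // h Bh.
  have -> : comb_delta (sel mu n) h - comb_delta s h =
    (mu h - comb_delta s h) - (mu h - comb_delta (sel mu n) h) by ring.
  apply: le_trans (ler_normB _ _) _; rewrite addrC; apply: lerD; last exact: He.
  exact: Hsel.
have ucv mu : FX mu -> u mu @ \oo --> lim (u mu @ \oo).
  move=> Fmu; apply/cauchy_cvgP; apply: cauchy_exP => eps e0.
  have k0 : 0 < 2 * L + 1 by lra.
  have [N HN] := ev_inv (divr_gt0 e0 k0).
  exists (u mu N); exists N => // n /= Nn; rewrite -ball_normE /=.
  have := Ksel mu (sel mu n) N (n.+1%:R^-1) Fmu (Hsel mu n Fmu).
  have := HN n Nn; have := HN N (leqnn N).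
  set a := N.+1%:R^-1; set b := n.+1%:R^-1 => ha hb H.
  apply: le_lt_trans H _.
  have : L * (a + b) <= L * (2 * (eps / (2 * L + 1))).
    by apply: ler_wpM2l => //; lra.
  have : L * (2 * (eps / (2 * L + 1))) < eps.
    rewrite mulrA mulrA ltr_pdivrMr //; nra.
  lra.
have P mu s e : FX mu -> (forall h, Ball h -> `|mu h - comb_delta s h| <= e) ->
    `|lim (u mu @ \oo) - Fs f s| <= L * e.
  move=> Fmu He; rewrite -subr_le0; apply: (@le0_of_small _ 2) => // eps e0.
  have /cvgrPdist_lt /(_ eps e0) [N1 _ HN1] := ucv mu Fmu.
  have k0 : 0 < L + 1 by lra.
  have [N2 HN2] := ev_inv (divr_gt0 e0 k0).
  have h1 := HN1 (maxn N1 N2) (leq_maxl _ _).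
  have h2 := HN2 (maxn N1 N2) (leq_maxr _ _).
  have h3 := Ksel mu s (maxn N1 N2) e Fmu He.
  have := ler_distD (u mu (maxn N1 N2)) (lim (u mu @ \oo)) (Fs f s).
  move: h1 h2 h3; set t := (maxn N1 N2).+1%:R^-1 => h1 h2 h3.
  have t0 : 0 <= t by rewrite invr_ge0.
  have : L * t <= eps.
    move: h2; rewrite ltr_pdivlMr // => h2; nra.
  rewrite /= in h1; lra.
pose T mu := lim (u mu @ \oo).
exists T; split; last first.
  move=> x; apply/eqP; rewrite -subr_eq0 -normr_le0.
  have := P (combd [:: (1, x)]) [:: (1, x)] 0 (FX_combd _).
  rewrite mulr0 /Fs big_cons big_nil scale1r addr0; apply => h [Lh _].
  by rewrite /combd asboolT // subrr normr0.
split.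
  move=> a b mu nu Fmu Fnu; apply/eqP; rewrite -subr_eq0 -normr_le0.
  apply: (@le0_of_small _ (2 * L * (`|a| + `|b|))) => [|e e0].
    by rewrite !mulr_ge0 // addr_ge0.
  have [_ H1] := Fmu; have [s1 Hs1] := H1 e e0.
  have [_ H2] := Fnu; have [s2 Hs2] := H2 e e0.
  have P1 := P mu s1 e Fmu (fun h Bh => Hs1 h (proj1 Bh) (proj2 Bh)).
  have P2 := P nu s2 e Fnu (fun h Bh => Hs2 h (proj1 Bh) (proj2 Bh)).
  have P3 := P _ _ (`|a| * e + `|b| * e) (FX_lin a b Fmu Fnu)
    (fun h Bh => approx_lin a b (Hs1 h (proj1 Bh) (proj2 Bh)) (Hs2 h (proj1 Bh) (proj2 Bh))).
  rewrite Fs_cat !Fs_scale in P3.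
  set w := T (fun g => a * mu g + b * nu g) in P3 *.
  apply: le_trans (ler_distD (a *: Fs f s1 + b *: Fs f s2) _ _) _.
  have -> : a *: Fs f s1 + b *: Fs f s2 - (a *: T mu + b *: T nu) =
      a *: (Fs f s1 - T mu) + b *: (Fs f s2 - T nu).
    by rewrite !scalerBr opprD addrACA.
  apply: le_trans (lerD (lexx _) (ler_normD _ _)) _.
  rewrite !normrZ -(distrC (T mu)) -(distrC (T nu)).
  have := ler_wpM2l (normr_ge0 a) P1; have := ler_wpM2l (normr_ge0 b) P2.
  move: P3; rewrite /T /= -/(T mu) -/(T nu).
  set A := `|a|; set B := `|b|; nra.
exists L => mu Fmu; rewrite -subr_le0; apply: (@le0_of_small _ (2 * L)) => [|e e0].
  by rewrite mulr_ge0.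
have [_ H1] := Fmu; have [s1 Hs1] := H1 e e0.
have P1 := P mu s1 e Fmu (fun h Bh => Hs1 h (proj1 Bh) (proj2 Bh)).
have K1 : `|Fs f s1| <= L * (dnorm mu + e).
  apply: Kbound => // h Bh.
  have -> : comb_delta s1 h = mu h - (mu h - comb_delta s1 h) by ring.
  apply: le_trans (ler_normB _ _) _; apply: lerD; first exact: dnorm_ub.
  exact: Hs1 (proj1 Bh) (proj2 Bh).
have := ler_distD (Fs f s1) (T mu) 0; rewrite !subr0 => H.
move: P1; rewrite -/(T mu) => P1; nra.
Qed.



Lemma nontriv (mu0 : (X -> R) -> R) : FX mu0 -> dnorm mu0 = 1 -> exists x0 : X, x0 <> 0.
Proof.
move=> Fmu d1; apply: contrapT => nx.
have all0 (x : X) : x = 0 by apply: contrapT => hx; apply: nx; exists x.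
have z0 : mu0 (fun _ => 0) = 0.
  apply/eqP; rewrite -normr_le0; apply: (@le0_of_small _ 1) => // e e0.
  have [_ H] := Fmu; have [s Hs] := H e e0.
  have := Hs _ (proj1 (Ball0 X)) (proj2 (Ball0 X)).
  rewrite mul1r /comb_delta big1 ?subr0 // => p _; exact: mulr0.
have : dnorm mu0 <= 0.
  apply: dnorm_le => // h [Lh _].
  have -> : h = (fun _ => 0) by apply: funext => x; rewrite (all0 x) (proj1 Lh).
  by rewrite z0 normr0.
by rewrite d1 ler10.
Qed.

Lemma attain (S : ((X -> R) -> R) -> Y) (mu0 : (X -> R) -> R) : uniformly_convex Y -> is_op S -> FX mu0 -> dnorm mu0 = 1 ->
  `|S mu0| = opnorm S ->
  exists (x y : nat -> X), [/\ `|S mu0| = lipnorm (gS S), (forall n, x n <> y n) &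
    (fun n => (`|x n - y n|)^-1 *: (gS S (x n) - gS S (y n))) @ \oo --> S mu0].
Proof.
move=> UC Sop Fmu d1 Nz.
have N0 : 0 <= opnorm S := opnorm_ge0 Sop.
move: Nz N0; set N := opnorm S; set z := S mu0 => Nz N0.
set g := gS S.
have [x0 x00] := nontriv Fmu d1.
have glip x y : `|g x - g y| <= N * `|x - y| := gS_lip x y Sop.
have g0 : g 0 = 0 := gS0 Sop.
have qle x y : x <> y -> `|(`|x - y|)^-1 *: (g x - g y)| <= N.
  move=> xy; have dxy : 0 < `|x - y| by rewrite normr_gt0 subr_eq0; apply/eqP.
  by rewrite normrZ normfV normr_id ler_pdivrMl // mulrC.
have claim e : 0 < e -> exists x y, x <> y /\ `|(`|x - y|)^-1 *: (g x - g y) - z| < e.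
  move=> e0.
  have [Nz0|Npos] := eqVneq N 0.
    exists x0, 0; split => //.
    have zz : z = 0 by apply/eqP; rewrite -normr_eq0 Nz Nz0.
    have gg : g x0 - g 0 = 0.
      by apply/eqP; rewrite -normr_le0; have := glip x0 0; rewrite Nz0 mul0r.
    by rewrite gg zz scaler0 subr0 normr0.
  have Np : 0 < N by rewrite lt_neqAle eq_sym Npos N0.
  have [phi [Hlin Hle Hz]] := hahn_banach z.
  have [p0 pD pZ pB] := phi_props Hlin.
  have [del [del0 Hdel]] := UC (e / N) (divr_gt0 e0 Np).
  set d := Num.min del (2%:R^-1).
  have d0 : 0 < d by rewrite lt_min del0 invr_gt0 ltr0Sn.
  have dle : d <= del by rewrite ge_min lexx.
  have dh : d <= 2%:R^-1 by rewrite ge_min lexx orbT.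
  have dh' : 2 * d <= 1.
    by move: dh; rewrite -[X in _ <= X]mul1r ler_pdivlMr // mulrC.
  have C : exists x y, x <> y /\ (N - N * d) * `|x - y| <= phi (g x) - phi (g y).
    apply: contrapT => nC.
    have H x y : x <> y -> phi (g x) - phi (g y) < (N - N * d) * `|x - y|.
      move=> xy; rewrite ltNge; apply/negP => Hc; apply: nC; exists x, y; split => //.
    set c := N - N * d.
    have c0 : 0 < c.
      rewrite /c; have h : 0 < 1 - d by lra.
      by have := mulr_gt0 Np h; lra.
    have Hc x y : `|phi (g x) - phi (g y)| <= c * `|x - y|.
      have [->|xy] := pselect (x = y); first by rewrite !subrr !normr0 mulr0.
      rewrite ler_norml; apply/andP; split; last exact: ltW (H _ _ xy).
      have := H y x (nesym xy); rewrite (distrC y x); rewrite /c; lra.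
    pose hh := fun x => c^-1 * phi (g x).
    have hl x y : `|hh x - hh y| <= `|x - y|.
      rewrite /hh -mulrBr normrM gtr0_norm ?invr_gt0 // ler_pdivrMl //; exact: Hc.
    have Bh : Ball hh.
      split; last by apply: lipnorm_le => // x y; rewrite mul1r; exact: hl.
      split; first by rewrite /hh g0 p0 mulr0.
      by exists 1 => x y; rewrite mul1r; exact: hl.
    set t := d / 4%:R.
    have t0 : 0 < t by rewrite divr_gt0.
    have t4 : 4%:R * t = d by rewrite /t mulrC mulfVK // pnatr_eq0.
    have [_ Happ] := Fmu; have [s Hs] := Happ t t0.
    have m1 : `|mu0 hh| <= 1 by rewrite -d1; exact: dnorm_ub.
    have cs : `|comb_delta s hh| <= 1 + t.
      have := Hs hh (proj1 Bh) (proj2 Bh).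
      have ee : mu0 hh - (mu0 hh - comb_delta s hh) = comb_delta s hh by ring.
      have := ler_normB (mu0 hh) (mu0 hh - comb_delta s hh); rewrite ee; lra.
    have Sd : `|z - S (combd s)| <= N * t.
      rewrite (_ : z - S (combd s) = S (fun k => 1 * mu0 k + (-1) * combd s k)); last first.
        rewrite (@opL _ _ S mu0 (combd s) 1 (-1) (fun k => 1 * mu0 k + (-1) * combd s k)) // ?scale1r ?scaleN1r //.
        exact: FX_combd.
      apply: le_trans (op_le Sop (FX_lin 1 (-1) Fmu (FX_combd s))) _.
      apply: ler_wpM2l => //; apply: dnorm_le; first exact: ltW.
      move=> k [Lk nk]; rewrite mul1r mulN1r /combd asboolT //; exact: Hs.
    have phiS : phi (S (combd s)) = c * comb_delta s hh.
      have := phi_Fs (gS S) s Hlin; rewrite /Fs /gS => E.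
      rewrite op_combd // E /comb_delta mulr_sumr; apply: eq_bigr => p _.
      by rewrite /hh mulrCA mulVKf ?gt_eqF.
    have E : N = phi (z - S (combd s)) + phi (S (combd s)).
      by rewrite pB subrK Hz Nz.
    have h1 := Hle (z - S (combd s)).
    have h2 : c * comb_delta s hh <= c * (1 + t).
      apply: ler_wpM2l; first exact: ltW.
      exact: le_trans (ler_norm _) cs.
    rewrite phiS in E; have h3 := le_trans h1 Sd.
    have h4 := mulr_gt0 Np t0.
    have h5 := mulr_ge0 (mulr_ge0 N0 (ltW t0)) (ltW t0).
    move: h2 E h3; rewrite /c -t4; lra.
  have [x [y [xy Hxy]]] := C.
  exists x, y; split => //.
  have dxy : 0 < `|x - y| by rewrite normr_gt0 subr_eq0; apply/eqP.
  set q := (`|x - y|)^-1 *: (g x - g y).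
  have qN := qle x y xy.
  have phq : N - N * d <= phi q.
    by rewrite /q pZ pB ler_pdivlMl // mulrC.
  rewrite ltNge; apply/negP => He.
  have iN : 0 < N^-1 by rewrite invr_gt0.
  have NiN : N^-1 * N = 1 by rewrite mulVf ?gt_eqF.
  have hu : `|N^-1 *: q| <= 1 by rewrite normrZ gtr0_norm // ler_pdivrMl // mulr1.
  have hv : `|N^-1 *: z| <= 1 by rewrite normrZ gtr0_norm // Nz NiN.
  have huv : e / N <= `|N^-1 *: q - N^-1 *: z|.
    by rewrite -scalerBr normrZ gtr0_norm // mulrC ler_wpM2l // ltW.
  have hA := Hdel _ _ hu hv huv.
  have hB := Hle ((2%:R^-1 : R) *: (N^-1 *: q + N^-1 *: z)).
  rewrite (pZ 2%:R^-1) pD (pZ N^-1 q) (pZ N^-1 z) Hz Nz NiN in hB.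
  have hC : 1 - d <= N^-1 * phi q.
    have := ler_wpM2l (ltW iN) phq; rewrite mulrBr NiN mulrA NiN mul1r //.
  have two : (2%:R^-1 : R) * 2 = 1 by rewrite mulVf // pnatr_eq0.
  move: hA hB hC; move: (N^-1 * phi q) => a.
  set w := `|(2%:R^-1 : R) *: _|; lra.
have /choice [xy Hxy] : forall n : nat, exists p : X * X, p.1 <> p.2 /\
    `|(`|p.1 - p.2|)^-1 *: (g p.1 - g p.2) - z| < n.+1%:R^-1.
  move=> n; have e0 : 0 < n.+1%:R^-1 :> R by rewrite invr_gt0 ltr0Sn.
  by have [x [y [xy H]]] := claim _ e0; exists (x, y).
exists (fun n => (xy n).1), (fun n => (xy n).2); split.
- apply/eqP; rewrite eq_le; apply/andP; split; last first.
    by rewrite Nz; apply: lipnorm_le => // x y; exact: glip.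
  rewrite -subr_le0; apply: (@le0_of_small _ 1) => // e e0.
  have [M HM] := ev_inv e0; have [xyM HM2] := Hxy M; have HM1 := HM M (leqnn M).
  move: HM2 xyM HM1; case: (xy M) => x y /= HM2 xyM HM1.
  have dxy : 0 < `|x - y| by rewrite normr_gt0 subr_eq0; apply/eqP.
  have hq := lip_quot (gS_Lip0 Sop) xyM; rewrite -/g in hq.
  have qq : `|(`|x - y|)^-1 *: (g x - g y)| = `|g x - g y| / `|x - y|.
    by rewrite normrZ normfV normr_id mulrC.
  have := ler_distD ((`|x - y|)^-1 *: (g x - g y)) z 0.
  rewrite !subr0 qq (distrC z) mul1r; move=> hh; have h6 := lt_trans HM2 HM1; move: hh h6 hq.
  move: (`|z|) (lipnorm g) (`|_ - z|) (`|g x - g y| / `|x - y|) => A B C D; lra.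
- by move=> n; exact: (Hxy n).1.
- apply/cvgrPdist_lt => e e0; have [M HM] := ev_inv e0; exists M => // n /= Mn.
  rewrite distrC; exact: lt_trans (Hxy n).2 (HM n Mn).
Qed.

End Lin.
End Aux.

Unset Implicit Arguments. Set Strict Implicit.

Theorem corollary3p9 (R : realType) (X Y : completeNormedModType R) :
  uniformly_convex Y ->
  (forall (T : ((X -> R) -> R) -> Y), is_op T ->
     forall eps : R, 0 < eps ->
       exists S : ((X -> R) -> R) -> Y,
         NA S /\ opnorm (fun mu => T mu - S mu) < eps) ->
  forall f : X -> Y, Lip0 f ->
    forall eps : R, 0 < eps ->
      exists g : X -> Y, A_set g /\ lipnorm (f \- g) < eps.
Proof.
move=> UC Hd f Lf eps e0.
have [T [Top Tf]] := Tf_exists Lf.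
have [S [[Sop [mu0 [Fmu0 dmu0 Smu0]]] Hsm]] := Hd T Top eps e0.
exists (gS S); split.
  split; first exact: gS_Lip0.
  have [x [y [H1 H2 H3]]] := attain UC Sop Fmu0 dmu0 Smu0.
  by exists (S mu0), x, y; split.
have TS := is_op_sub Top Sop.
have -> : (f \- gS S) = gS (fun mu => T mu - S mu).
  by apply: funext => x; rewrite /gS /= Tf.
apply: le_lt_trans Hsm; apply: lipnorm_le; first exact: opnorm_ge0.
by move=> x y; exact: gS_lip.
Qed.
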